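(* Let $L$ be finite-dimensional, $A=A_1\otimes\cdots\otimes A_n$, $\mathcal{E}_{L\to A}$ a completely positive trace-preserving map with Stinespring isometry $V:L\to A\otimes F$ (so $\mathcal{E}(\cdot)=\operatorname{tr}_F(V(\cdot)V^\dagger)$). Let $T_L$ be an observable on $L$ and $T_A=\sum_\alpha T_\alpha$, each $T_\alpha$ acting on $A_\alpha=\bigotimes_{i\in\alpha}A_i$. Assume: there are $\nu\in\mathbb{R},\delta\geq0$ with $\|(T_L-\nu\mathbb{1}_L)-\mathcal{E}^\dagger(T_A)\|_\infty\leq\delta$; for cut-offs $t_\alpha^-\le t_\alpha^+$ there is $\eta\geq0$ with $\left|\operatorname{tr}\left(\sum_\alpha(T_\alpha-t_\alpha\mathbb{1})\Pi_\alpha^\perp\mathcal{E}(\sigma_L)\right)\right|\leq\eta$ for all states $\sigma_L$, where $\Pi_\alpha^\perp$ projects onto eigenspaces of $T_\alpha$ with eigenvalues outside $[t_\alpha^-,t_\alpha^+]$ and $t_\alpha=(t_\alpha^-+t_\alpha^+)/2$; and $\{q_\alpha\}$ is a probability distribution with $q_\alpha>0$ for each $\alpha$ with a term $T_\alpha$. Consider the channel $$\mathcal{C}(\cdot)=\sum_\alpha q_\alpha|\alpha\rangle\langle\alpha|_{C'}\otimes\operatorname{tr}_{A\setminus A_\alpha}(V(\cdot)V^\dagger),$$ whose output is on $C'\otimes E\otimes F$ with each $A_\alpha$ isometrically embedded in a system $E$ (this is a complementary channel of the encoding followed by the erasure noise $\sum_\alpha q_\alpha|\alpha\rangle\langle\alpha|_C\otimes|\phi_\alpha\rangle\langle\phi_\alpha|_{A_\alpha}\otimes\operatorname{tr}_{A_\alpha}(\cdot)$).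 Then there exists an observable $Z_{C'E}$ with $$\left\|\mathcal{C}^\dagger(\mathbb{1}_F\otimes Z_{C'E})-(T_L-\nu'\mathbb{1}_L)\right\|_\infty\leq\delta+\eta,\qquad\|Z_{C'E}\|_\infty\leq\max_\alpha\frac{\Delta T_\alpha}{2q_\alpha},$$ where $\nu'=\nu+\sum_\alpha(t_\alpha^-+t_\alpha^+)/2$ and $\Delta T_\alpha=t_\alpha^+-t_\alpha^-$.
   Context: $\mathcal{E}^\dagger$ and $\mathcal{C}^\dagger$ denote the adjoint (Heisenberg-picture) maps. *)

(* Defs.v *)
(* Finite-dimensional quantum systems are modelled by finite
   types of basis labels; operators are plain functions I -> J -> C
   (matrices indexed by finite types) over a numeric closed field C
   (e.g. the complex numbers complex R for R : realType). *)
From HB Require Import structures.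
From mathcomp Require Import all_boot all_order all_algebra.
Set Implicit Arguments. Unset Strict Implicit. Unset Printing Implicit Defensive.
Import Order.TTheory GRing.Theory Num.Theory.
Local Open Scope ring_scope.

Section Ops.
Variable C : numClosedFieldType.

(* operator from span(J) to span(I): an I x J matrix *)
Definition op (I J : finType) := I -> J -> C.

Definition opmul (I J K : finType) (X : op I J) (Y : op J K) : op I K :=
  fun i k => \sum_j X i j * Y j k.
Definition opadj (I J : finType) (X : op I J) : op J I := fun j i => (X i j)^*.
Definition opid (I : finType) : op I I := fun i j => (i == j)%:R.
Definition opadd (I J : finType) (X Y : op I J) : op I J := fun i j => X i j + Y i j.
Definition opsub (I J : finType) (X Y : op I J) : op I J := fun i j => X i j - Y i j.
Definition opscale (I J : finType) (a : C) (X : op I J) : op I J := fun i j => a * X i j.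
Definition optr (I : finType) (X : op I I) : C := \sum_i X i i.
Definition unitop (I J : finType) (i : I) (j : J) : op I J :=
  fun k l => ((k == i) && (l == j))%:R.
Definition optens (I1 J1 I2 J2 : finType) (X : op I1 J1) (Y : op I2 J2)
  : op (I1 * I2)%type (J1 * J2)%type := fun a b => X a.1 b.1 * Y a.2 b.2.

Definition is_hermitian (I : finType) (X : op I I) := forall i j, X j i = (X i j)^*.
Definition is_isometry (I J : finType) (V : op I J) :=
  forall j j', opmul (opadj V) V j j' = (j == j')%:R.
Definition psd (I : finType) (X : op I I) :=
  forall v : I -> C, 0 <= \sum_i \sum_j (v i)^* * X i j * v j.
Definition is_state (I : finType) (X : op I I) :=
  [/\ is_hermitian X, psd X & optr X = 1].
(* ||X||_oo <= c, i.e. sup_{v} ||X v|| / ||v|| <= c *)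
Definition opnorm_le (I J : finType) (X : op I J) (c : C) :=
  0 <= c /\ forall v : J -> C,
    \sum_i `|\sum_j X i j * v j| ^+ 2 <= c ^+ 2 * \sum_j `|v j| ^+ 2.

Definition ptrace2 (I F : finType) (X : op (I * F)%type (I * F)%type) : op I I :=
  fun i i' => \sum_f X (i, f) (i', f).

(* Heisenberg-picture adjoint of a linear map Phi on operators, defined by
   tr(Phi^dag(Y) rho) = tr(Y Phi(rho)) for all rho (tested on matrix units) *)
Definition heis (I J : finType) (Phi : op I I -> op J J) (Y : op J J) : op I I :=
  fun i j => optr (opmul Y (Phi (unitop j i))).

(* P is the projector onto the eigenspaces of X with eigenvalues outside
   [tm, tp]: it kills eigenvectors with eigenvalue in [tm,tp] and fixes the
   other eigenvectors (this determines P since X is diagonalizable). *)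
Definition spec_proj_out (I : finType) (X : op I I) (tm tp : C) (P : op I I) :=
  forall (v : I -> C) (lam : C), (forall i, \sum_j X i j * v j = lam * v i) ->
    if (tm <= lam <= tp) then (forall i, \sum_j P i j * v j = 0)
    else (forall i, \sum_j P i j * v j = v i).

(* The composite system A = A_1 (x) ... (x) A_n, dim A_i = d i *)
Variables (n : nat) (d : 'I_n -> nat).

Definition basisA : finType := {dffun forall i : 'I_n, 'I_(d i)}.
Definition basisSub (al : {set 'I_n}) : finType :=
  {dffun forall j : {i : 'I_n | i \in al}, 'I_(d (val j))}.
Definition res (al : {set 'I_n}) (x : basisA) : basisSub al :=
  [ffun j => x (val j)].
Definition agree_out (al : {set 'I_n}) (x y : basisA) : bool :=
  [forall i, (i \notin al) ==> (x i == y i)].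
(* X_alpha (x) 1_{A \ A_alpha} as an operator on A *)
Definition embed (al : {set 'I_n}) (X : op (basisSub al) (basisSub al))
  : op basisA basisA :=
  fun x y => if agree_out al x y then X (res al x) (res al y) else 0.
(* partial trace over A \ A_alpha, keeping A_alpha (x) F *)
Definition ptrace_out (al : {set 'I_n}) (F : finType)
  (X : op (basisA * F)%type (basisA * F)%type) : op (basisSub al * F)%type (basisSub al * F)%type :=
  fun a b => \sum_(x | res al x == a.1)
               \sum_(y | (res al y == b.1) && agree_out al x y) X (x, a.2) (y, b.2).

Variables (L F : finType).
Definition enc (V : op (basisA * F)%type L) (rho : op L L) : op basisA basisA :=
  ptrace2 (opmul (opmul V rho) (opadj V)).

Definition TA (S : {set {set 'I_n}}) (T : forall al, op (basisSub al) (basisSub al))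
  : op basisA basisA := fun x y => \sum_(al in S) embed (T al) x y.

Definition etaop (S : {set {set 'I_n}}) (T : forall al, op (basisSub al) (basisSub al))
  (tm tp : {set 'I_n} -> C) (P : forall al, op (basisSub al) (basisSub al))
  : op basisA basisA :=
  fun x y => \sum_(al in S)
    embed (opmul (opsub (T al) (opscale ((tm al + tp al) / 2) (@opid (basisSub al)))) (P al)) x y.

Variable E : finType.
(* C(rho) = sum_alpha q_alpha |alpha><alpha|_{C'} (x) (W_alpha (x) 1_F)
            tr_{A\A_alpha}(V rho V^dag) (W_alpha (x) 1_F)^dag,
   output on C' (x) E (x) F, with C' having basis {set 'I_n} *)
Definition compl_chan (q : {set 'I_n} -> C)
  (W : forall al, op E (basisSub al)) (V : op (basisA * F)%type L) (rho : op L L)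
  : op (({set 'I_n} * E) * F)%type (({set 'I_n} * E) * F)%type :=
  fun a b =>
    if a.1.1 == b.1.1 then
      q a.1.1 * opmul (opmul (optens (W a.1.1) (@opid F))
                             (@ptrace_out a.1.1 F (opmul (opmul V rho) (opadj V))))
                      (opadj (optens (W a.1.1) (@opid F))) (a.1.2, a.2) (b.1.2, b.2)
    else 0.

End Ops.
Arguments opid {C} I _ _.

(* Main.v *)
Require Import Defs.
From HB Require Import structures.
From mathcomp Require Import all_boot all_order all_algebra.
From mathcomp Require Import sesquilinear spectral ring.
From Stdlib Require Import FunctionalExtensionality.
Set Implicit Arguments. Unset Strict Implicit. Unset Printing Implicit Defensive.
Import Order.TTheory GRing.Theory Num.Theory Num.Def.
Local Open Scope ring_scope.

Section S.
Variable C : numClosedFieldType.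

Definition dform (I K : finType) (W : op C I K) (c : K -> C) : op C I I :=
  fun i j => \sum_k c k * W i k * (W j k)^*.

Lemma sum_enum (I : finType) (F : I -> C) :
  \sum_i F i = \sum_(a < #|I|) F (enum_val a).
Proof.
by rewrite (reindex (@enum_val I predT)) //; exists enum_rank => x _;
  rewrite ?enum_valK ?enum_rankK.
Qed.

Definition matof (I : finType) (X : op C I I) : 'M[C]_#|I| :=
  \matrix_(a, b) X (enum_val a) (enum_val b).
Definition specU (I : finType) (X : op C I I) : op C I I :=
  fun i k => (spectralmx (matof X) (enum_rank k) (enum_rank i))^*.
Definition specL (I : finType) (X : op C I I) : I -> C :=
  fun k => spectral_diag (matof X) 0 (enum_rank k).

Lemma spec_op (I : finType) (X : op C I I) : is_hermitian X ->
  [/\ is_isometry (specU X), (forall i j, \sum_k specU X i k * (specU X j k)^* = (i == j)%:R),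
      (forall k, specL X k \is Num.real) & forall i j, X i j = dform (specU X) (specL X) i j].
Proof.
move=> HX; rewrite /specU /specL.
set A := matof X.
have Ah : A \is hermsymmx.
  apply/is_hermitianmxP; rewrite expr0 scale1r; apply/matrixP => a b.
  by rewrite /A /matof !mxE HX.
pose S := spectralmx A; pose dd := spectral_diag A.
have Su : S \is unitarymx := spectral_unitarymx A.
have SS : S *m (map_mx conjC S^T) = 1%:M by apply/unitarymxP.
have SS' : (map_mx conjC S^T) *m S = 1%:M.
  by rewrite -(invmx_unitary Su) mulVmx // spectral_unit.
have AE : A = map_mx conjC S^T *m diag_mx dd *m S.
  by rewrite -(invmx_unitary Su); apply/orthomx_spectralP/hermitian_normalmx.
have dr := hermitian_spectral_diag_real Ah.
split.
- move=> j j'; rewrite /opmul /opadj sum_enum.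
  have /matrixP/(_ (enum_rank j) (enum_rank j')) := SS.
  rewrite !mxE (inj_eq enum_rank_inj) => <-.
  by apply: eq_bigr => a _; rewrite !mxE enum_valK conjCK mulrC.
- move=> i j; rewrite sum_enum.
  have /matrixP/(_ (enum_rank i) (enum_rank j)) := SS'.
  rewrite !mxE (inj_eq enum_rank_inj) => <-.
  by apply: eq_bigr => a _; rewrite !mxE enum_valK conjCK.
- by move=> k; apply: (mxOverP dr).
- move=> i j; rewrite /dform.
  have /matrixP/(_ (enum_rank i) (enum_rank j)) := AE.
  rewrite /A /matof !mxE !enum_rankK => ->; rewrite [RHS]sum_enum.
  apply: eq_bigr => a _; rewrite !mxE big_distrl /=.
  rewrite (bigD1 a) //= big1 ?addr0; last first.
    by move=> b /negbTE nb; rewrite !mxE nb mulr0n mulr0 mul0r.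
  by rewrite !mxE eqxx mulr1n enum_valK conjCK; ring.
Qed.
End S.

Section N.
Variable C : numClosedFieldType.

Lemma iso_norm (I K : finType) (W : op C I K) : is_isometry W ->
  forall y : K -> C, \sum_i `|\sum_k W i k * y k| ^+ 2 = \sum_k `|y k| ^+ 2.
Proof.
move=> HW y.
rewrite (eq_bigr (fun i => \sum_k \sum_l (W i k * y k) * (W i l * y l)^*)); last first.
  move=> i _; rewrite normCK rmorph_sum big_distrl; apply: eq_bigr => k _.
  by rewrite big_distrr.
rewrite exchange_big; apply: eq_bigr => k _; rewrite exchange_big /=.
rewrite (bigD1 k) //= [X in _ + X]big1 ?addr0.
  rewrite normCK -(mulr1 (y k * _)).
  have := HW k k; rewrite /opmul /opadj eqxx mulr1n => <-.
  rewrite big_distrr; apply: eq_bigr => i _; rewrite rmorphM /=; ring.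
move=> l /negbTE nl.
have := HW l k; rewrite /opmul /opadj nl mulr0n => H0.
transitivity (y k * (y l)^* * \sum_j (W j l)^* * W j k); last by rewrite H0 mulr0.
rewrite big_distrr; apply: eq_bigr => i _.
rewrite rmorphM /=; ring.
Qed.

Lemma bessel (I K : finType) (W : op C I K) : is_isometry W ->
  forall v : I -> C, \sum_k `|\sum_j (W j k)^* * v j| ^+ 2 <= \sum_j `|v j| ^+ 2.
Proof.
move=> HW v.
pose a k := \sum_j (W j k)^* * v j.
pose p i := \sum_k W i k * a k.
have H1 : \sum_i p i * (v i)^* = \sum_k `|a k| ^+ 2.
  rewrite /p (eq_bigr (fun i => \sum_k W i k * a k * (v i)^*)); last first.
    by move=> i _; rewrite big_distrl.
  rewrite exchange_big; apply: eq_bigr => k _ /=.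
  rewrite normCK /a rmorph_sum big_distrr; apply: eq_bigr => j _ /=.
  by rewrite rmorphM /= conjCK; ring.
have H2 : \sum_i v i * (p i)^* = \sum_k `|a k| ^+ 2.
  have -> : \sum_i v i * (p i)^* = (\sum_i p i * (v i)^*)^*.
    by rewrite rmorph_sum; apply: eq_bigr => i _; rewrite rmorphM /= conjCK mulrC.
  rewrite H1 conj_Creal // ger0_real // sumr_ge0 // => k _; exact: exprn_ge0.
have H3 : \sum_i `|p i| ^+ 2 = \sum_k `|a k| ^+ 2 by apply: iso_norm.
have : 0 <= \sum_i `|v i - p i| ^+ 2 by apply: sumr_ge0 => i _; apply: exprn_ge0.
have -> : \sum_i `|v i - p i| ^+ 2 = \sum_i `|v i| ^+ 2 - \sum_k `|a k| ^+ 2.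
  have -> : \sum_i `|v i - p i| ^+ 2 = \sum_i (`|v i| ^+ 2 - v i * (p i)^*
                   - p i * (v i)^* + `|p i| ^+ 2).
    by apply: eq_bigr => i _; rewrite !normCK rmorphB /=; ring.
  rewrite !big_split /= !sumrN H1 H2 H3; ring.
by rewrite subr_ge0.
Qed.

Definition nrm2 (I : finType) (v : I -> C) := \sum_i `|v i| ^+ 2.
Definition app (I J : finType) (X : op C I J) (v : J -> C) : I -> C :=
  fun i => \sum_j X i j * v j.

Lemma dform_norm (I K : finType) (W : op C I K) (c : K -> C) (b : C) :
  is_isometry W -> 0 <= b -> (forall k, `|c k| <= b) -> opnorm_le (dform W c) b.
Proof.
move=> HW b0 Hc; split => // v.
pose a k := \sum_j (W j k)^* * v j.
have -> : \sum_i `|\sum_j dform W c i j * v j| ^+ 2 =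
          \sum_i `|\sum_k W i k * (c k * a k)| ^+ 2.
  apply: eq_bigr => i _; congr (_ ^+ 2); congr `|_|.
  rewrite /dform (eq_bigr (fun j => \sum_k c k * W i k * (W j k)^* * v j)); last first.
    by move=> j _; rewrite big_distrl.
  rewrite exchange_big; apply: eq_bigr => k _ /=; rewrite /a !big_distrr.
  by apply: eq_bigr => j _ /=; ring.
rewrite iso_norm //.
apply: le_trans (_ : \sum_k b ^+ 2 * `|a k| ^+ 2 <= _).
  apply: ler_sum => k _; rewrite normrM exprMn; apply: ler_wpM2r; first exact: exprn_ge0.
  by rewrite lerXn2r // ?nnegrE.
rewrite -big_distrr /=; apply: ler_wpM2l; first exact: exprn_ge0.
exact: bessel.
Qed.
End N.

Section T.
Variable C : numClosedFieldType.

Lemma opnorm_ext (I J : finType) (X Y : op C I J) c :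
  (forall i j, X i j = Y i j) -> opnorm_le X c -> opnorm_le Y c.
Proof.
move=> E [c0 H]; split => // v.
rewrite (eq_bigr (fun i => `|\sum_j X i j * v j| ^+ 2)); first exact: H.
by move=> i _; congr (`|_| ^+ 2); apply: eq_bigr => j _; rewrite E.
Qed.

Lemma opnorm_opp (I J : finType) (X : op C I J) c :
  opnorm_le X c -> opnorm_le (fun i j => - X i j) c.
Proof.
move=> [c0 H]; split => // v.
rewrite (eq_bigr (fun i => `|\sum_j X i j * v j| ^+ 2)); first exact: H.
move=> i _.
by rewrite (eq_bigr (fun j => - (X i j * v j))) ?sumrN ?normrN // => j _; rewrite mulNr.
Qed.

Lemma opnorm0 (I J : finType) (X : op C I J) :
  opnorm_le X 0 -> forall i j, X i j = 0.
Proof.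
move=> [_ H] i j0.
pose v := fun j => (j == j0)%:R : C.
have -> : X i j0 = \sum_j X i j * v j.
  rewrite (bigD1 j0) //= /v eqxx mulr1 big1 ?addr0 // => j /negbTE ->; by rewrite mulr0.
have := H v; rewrite expr0n /= mul0r => Hs.
have : \sum_i `|\sum_j X i j * v j| ^+ 2 = 0.
  by apply/eqP; rewrite eq_le Hs sumr_ge0 // => k _; exact: exprn_ge0.
move/eqP; rewrite psumr_eq0; last by move=> k _; exact: exprn_ge0.
by move/allP/(_ i (mem_index_enum i)); rewrite /= sqrf_eq0 normr_eq0 => /eqP.
Qed.

Lemma pt_ineq (a b x y : C) : a \is Num.real -> b \is Num.real ->
  a * b * `|x + y| ^+ 2 <= (a * b + b ^+ 2) * `|x| ^+ 2 + (a ^+ 2 + a * b) * `|y| ^+ 2.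
Proof.
move=> ar br; rewrite -subr_ge0.
have -> : (a * b + b ^+ 2) * `|x| ^+ 2 + (a ^+ 2 + a * b) * `|y| ^+ 2 - a * b * `|x + y| ^+ 2
   = `|b * x - a * y| ^+ 2.
  by rewrite !normCK !rmorphB !rmorphD !rmorphM /= !(conj_Creal ar) !(conj_Creal br); ring.
exact: exprn_ge0.
Qed.

Lemma opnorm_add (I J : finType) (X Y : op C I J) a b :
  opnorm_le X a -> opnorm_le Y b -> opnorm_le (fun i j => X i j + Y i j) (a + b).
Proof.
move=> HX HY; have [a0 Ha] := HX; have [b0 Hb] := HY.
have [/eqP a00|an0] := boolP (a == 0).
  subst a; rewrite add0r; apply: opnorm_ext HY => i j.
  by rewrite (opnorm0 HX) add0r.
have [/eqP b00|bn0] := boolP (b == 0).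
  subst b; rewrite addr0; apply: opnorm_ext HX => i j.
  by rewrite (opnorm0 HY) addr0.
have ap : 0 < a by rewrite lt_def an0.
have bp : 0 < b by rewrite lt_def bn0.
have ar : a \is Num.real by apply: gtr0_real.
have br : b \is Num.real by apply: gtr0_real.
split; first by rewrite addr_ge0.
move=> v.
pose x i := \sum_j X i j * v j; pose y i := \sum_j Y i j * v j.
have -> : \sum_i `|\sum_j (X i j + Y i j) * v j| ^+ 2 = \sum_i `|x i + y i| ^+ 2.
  by apply: eq_bigr => i _; rewrite /x /y -big_split /=; congr (`|_| ^+ 2);
    apply: eq_bigr => j _; rewrite mulrDl.
have abp : 0 < a * b by rewrite mulr_gt0.
rewrite -(ler_pM2l abp) big_distrr /=.
apply: le_trans (ler_sum _ (fun i _ => pt_ineq (x i) (y i) ar br)) _.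
rewrite big_split /= -!big_distrr /=.
have hx := Ha v; have hy := Hb v; rewrite -/x -/y in hx hy.
apply: le_trans (lerD (ler_wpM2l _ hx) (ler_wpM2l _ hy)) _.
- by rewrite addr_ge0 // ?mulr_ge0 // exprn_ge0.
- by rewrite addr_ge0 // ?mulr_ge0 // exprn_ge0.
by rewrite le_eqVlt; apply/orP; left; apply/eqP; ring.
Qed.
End T.

Section A.
Variable C : numClosedFieldType.

Lemma dform_herm (I K : finType) (W : op C I K) (c : K -> C) :
  (forall k, c k \is Num.real) -> is_hermitian (dform W c).
Proof.
move=> cr i j; rewrite /dform rmorph_sum; apply: eq_bigr => k _.
by rewrite !rmorphM /= conjCK (conj_Creal (cr k)); ring.
Qed.

Lemma dform_eigen (I K : finType) (W : op C I K) (c : K -> C) :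
  is_isometry W -> forall i k, \sum_j dform W c i j * W j k = c k * W i k.
Proof.
move=> HW i k; rewrite /dform.
rewrite (eq_bigr (fun j => \sum_l c l * W i l * ((W j l)^* * W j k))); last first.
  by move=> j _; rewrite big_distrl; apply: eq_bigr => l _ /=; ring.
rewrite exchange_big /= (bigD1 k) //= [X in _ + X]big1 ?addr0.
  have := HW k k; rewrite /opmul /opadj eqxx mulr1n => H1.
  by rewrite -big_distrr /= H1 mulr1.
move=> l /negbTE nl; have := HW l k; rewrite /opmul /opadj nl mulr0n => H0.
by rewrite -big_distrr /= H0 mulr0.
Qed.

Definition ccf (I : finType) (T : op C I I) (tm tp : C) : I -> C :=
  fun k => if tm <= specL T k <= tp then specL T k - (tm + tp) / 2 else 0.
Definition Mop (I : finType) (T : op C I I) (tm tp : C) : op C I I :=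
  dform (specU T) (ccf T tm tp).

Lemma lemA (I : finType) (T P : op C I I) (tm tp : C) :
  is_hermitian T -> tm \is Num.real -> tp \is Num.real -> tm <= tp ->
  spec_proj_out T tm tp P ->
  [/\ (forall k, ccf T tm tp k \is Num.real),
      (forall k, `|ccf T tm tp k| <= (tp - tm) / 2) &
      forall a b, Mop T tm tp a b = T a b - (tm + tp) / 2 * (a == b)%:R
         - opmul (opsub T (opscale ((tm + tp) / 2) (opid I))) P a b].
Proof.
move=> HT tmr tpr tmp HP.
have [HU HUc HL HTd] := spec_op HT.
set U := specU T in HU HUc HTd *; set L := specL T in HL HTd *.
set t := (tm + tp) / 2.
have two0 : (2 : C) != 0 by rewrite pnatr_eq0.
have tr : t \is Num.real by rewrite /t realM ?realD ?realV ?realn.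
split.
- move=> k; rewrite /ccf; case: ifP => _; last exact: real0.
  by rewrite realB.
- move=> k; rewrite /ccf -/L -/t; case: ifP => [/andP [h1 h2]|_].
    rewrite real_ler_norml ?realB //; apply/andP; split.
      have e1 : L k - t - - ((tp - tm) / 2) = L k - tm by rewrite /t; field.
      by rewrite -subr_ge0 e1 subr_ge0.
    have e1 : (tp - tm) / 2 - (L k - t) = tp - L k by rewrite /t; field.
    by rewrite -subr_ge0 e1 subr_ge0.
  by rewrite normr0 divr_ge0 ?subr_ge0 // ler0n.
have eig : forall k i, \sum_j T i j * U j k = L k * U i k.
  move=> k i; rewrite -(dform_eigen L HU i k); apply: eq_bigr => j _.
  by rewrite HTd.
pose o k : C := if tm <= L k <= tp then 0 else 1.
have Pexp : forall m b, P m b = \sum_k o k * U m k * (U b k)^*.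
  move=> m b.
  have E1 : P m b = \sum_k (\sum_m' P m m' * U m' k) * (U b k)^*.
    rewrite (eq_bigr (fun k => \sum_m' P m m' * (U m' k * (U b k)^*))); last first.
      by move=> k _; rewrite big_distrl; apply: eq_bigr => m' _ /=; ring.
    rewrite exchange_big /= (bigD1 b) //= [X in _ + X]big1 ?addr0.
      by rewrite -big_distrr /= HUc eqxx mulr1.
    by move=> m' nm'; rewrite -big_distrr /= HUc (negbTE nm') mulr0.
  rewrite E1; apply: eq_bigr => k _.
  have := HP (fun j => U j k) (L k) (eig k); rewrite /o.
  by case: ifP => _ H; rewrite H; ring.
move=> a b; rewrite /Mop /dform /opmul /opsub /opscale /opid -/U.
have E2 : T a b - t * (a == b)%:R = \sum_k (L k - t) * U a k * (U b k)^*.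
  rewrite HTd /dform -HUc big_distrr -sumrB; apply: eq_bigr => k _ /=; ring.
have eigk : forall k, \sum_m (T a m - t * (a == m)%:R) * U m k = (L k - t) * U a k.
  move=> k.
  rewrite (eq_bigr (fun m => T a m * U m k - t * ((a == m)%:R * U m k))); last first.
    by move=> m _; ring.
  have Z0 : \sum_(i | i != a) (a == i)%:R * U i k = 0.
    by apply: big1 => m /negbTE; rewrite eq_sym => ->; rewrite mul0r.
  rewrite sumrB eig -big_distrr /= (bigD1 a) //= eqxx mul1r Z0 addr0; ring.
have E3 : \sum_m (T a m - t * (a == m)%:R) * P m b =
          \sum_k o k * (L k - t) * U a k * (U b k)^*.
  rewrite (eq_bigr (fun m => \sum_k (T a m - t * (a == m)%:R) * U m k * (o k * (U b k)^*))); last first.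
    by move=> m _; rewrite Pexp big_distrr; apply: eq_bigr => k _ /=; ring.
  rewrite exchange_big; apply: eq_bigr => k _ /=.
  by rewrite -big_distrl /= eigk; ring.
rewrite E2 E3 -sumrB; apply: eq_bigr => k _; rewrite /ccf /o -/L -/t.
by case: ifP => _; ring.
Qed.
End A.

Section O.
Variable C : numClosedFieldType.

Lemma max_gel (x y : C) : x <= Num.max x y.
Proof.
rewrite /Order.max; case: ifP => // /ltW //.
Qed.

Lemma max_ger (x y : C) : x \is Num.real -> y \is Num.real -> y <= Num.max x y.
Proof.
move=> xr yr; rewrite /Order.max; case: ifP => // h.
by move: h; rewrite real_ltNge // => /negbFE.
Qed.

Lemma bigmax_prop (T : finType) (S : {set T}) (f : T -> C) :
  (forall x, x \in S -> 0 <= f x) ->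
  0 <= \big[Num.max/0]_(x in S) f x /\
  forall x, x \in S -> f x <= \big[Num.max/0]_(x in S) f x.
Proof.
move=> H.
have H0 : 0 <= \big[Num.max/0]_(x in S) f x.
  apply: (big_rec (fun r => 0 <= r)) => // i r iS r0.
  have rr : r \is Num.real := ger0_real r0.
  apply: le_trans r0 _; apply: max_ger => //; apply: ger0_real; exact: H.
split => // x xS.
have : x \in index_enum T by rewrite mem_index_enum.
elim: (index_enum T) => // y s IH.
have Hs : 0 <= \big[Num.max/0]_(i <- s | i \in S) f i.
  apply: (big_rec (fun r => 0 <= r)) => // i r iS r0.
  have rr : r \is Num.real := ger0_real r0.
  apply: le_trans r0 _; apply: max_ger => //; apply: ger0_real; exact: H.
rewrite big_cons in_cons; case: ifP => yS /orP [/eqP xy|xs].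
- by subst; apply: max_gel.
- apply: le_trans (IH xs) _; apply: max_ger; apply: ger0_real => //; exact: H.
- by subst; rewrite yS in xS.
- exact: IH.
Qed.

Lemma iso_mul (I J K : finType) (W : op C I J) (U : op C J K) :
  is_isometry W -> is_isometry U -> is_isometry (opmul W U).
Proof.
move=> HW HU k k'; rewrite -(HU k k') /opmul /opadj.
rewrite (eq_bigr (fun i => \sum_a \sum_b (U a k)^* * U b k' * ((W i a)^* * W i b))); last first.
  move=> i _; rewrite rmorph_sum big_distrl; apply: eq_bigr => a _ /=.
  by rewrite big_distrr; apply: eq_bigr => b _ /=; rewrite rmorphM /=; ring.
rewrite exchange_big; apply: eq_bigr => a _ /=; rewrite exchange_big /=.
rewrite (bigD1 a) //= [X in _ + X]big1 ?addr0.
  by rewrite -big_distrr /=; have := HW a a; rewrite /opmul /opadj eqxx mulr1n => ->; rewrite mulr1.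
move=> b /negbTE nb; rewrite -big_distrr /=.
by have := HW a b; rewrite /opmul /opadj eq_sym nb mulr0n => ->; rewrite mulr0.
Qed.

Lemma conj_dform (I J K : finType) (W : op C I J) (U : op C J K) (c : K -> C) e e' :
  opmul (opmul W (dform U c)) (opadj W) e e' = dform (opmul W U) c e e'.
Proof.
rewrite /opmul /opadj /dform.
rewrite (eq_bigr (fun b => \sum_a \sum_k c k * (W e a * U a k) * ((W e' b)^* * (U b k)^*))); last first.
  move=> b _; rewrite big_distrl; apply: eq_bigr => a _ /=.
  by rewrite big_distrr big_distrl; apply: eq_bigr => k _ /=; ring.
rewrite exchange_big /=; rewrite (eq_bigr (fun a => \sum_k \sum_b c k * (W e a * U a k) * ((W e' b)^* * (U b k)^*))); last first.
  by move=> a _; rewrite exchange_big.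
rewrite exchange_big; apply: eq_bigr => k _ /=.
rewrite rmorph_sum -mulrA big_distrl big_distrr /=; apply: eq_bigr => a _ /=.
rewrite big_distrr big_distrr /=; apply: eq_bigr => b _ /=; rewrite rmorphM /=; ring.
Qed.

Lemma opnorm_mono (I J : finType) (X : op C I J) a c :
  opnorm_le X a -> a <= c -> opnorm_le X c.
Proof.
move=> [a0 H] ac; have c0 := le_trans a0 ac; split => // v.
apply: le_trans (H v) _; apply: ler_wpM2r; first by apply: sumr_ge0 => j _; exact: exprn_ge0.
by rewrite lerXn2r ?nnegrE.
Qed.

Lemma block_norm (B K : finType) (N : B -> op C K K) (c : C) :
  0 <= c -> (forall b, opnorm_le (N b) c) ->
  opnorm_le (fun x y : B * K => if x.1 == y.1 then N x.1 x.2 y.2 else 0) c.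
Proof.
move=> c0 HN; split => // v.
have pb : forall G : B * K -> C, \sum_y G y = \sum_b \sum_k G (b, k).
  by move=> G; rewrite pair_big; apply: eq_bigr => [[b k]].
rewrite pb [X in _ <= _ * X]pb big_distrr /=; apply: ler_sum => b _.
rewrite (eq_bigr (fun k => `|\sum_k' N b k k' * v (b, k')| ^+ 2)).
  exact: (proj2 (HN b) (fun k' => v (b, k'))).
move=> k _; congr (`|_| ^+ 2).
rewrite pb (bigD1 b) //= eqxx [X in _ + X]big1 ?addr0 //.
move=> b' /negbTE nb; apply: big1 => k' _; by rewrite /= eq_sym nb mul0r.
Qed.
End O.

Section H.
Variable C : numClosedFieldType.

Lemma sum_dr (I : finType) (F : I -> C) j : \sum_l F l * (l == j)%:R = F j.
Proof.
by rewrite (bigD1 j) //= eqxx mulr1 big1 ?addr0 // => l /negbTE ->; rewrite mulr0.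
Qed.

Lemma sum_dl (I : finType) (F : I -> C) j : \sum_l (j == l)%:R * F l = F j.
Proof.
rewrite (bigD1 j) //= eqxx mul1r big1 ?addr0 // => l; rewrite eq_sym => /negbTE ->.
by rewrite mul0r.
Qed.

Lemma natr_and (a b : bool) : ((a && b)%:R : C) = a%:R * b%:R.
Proof. by case: a; case: b; rewrite ?mulr1 ?mulr0 ?mul0r. Qed.

Lemma unit_sum2 (I J : finType) (A : I -> C) (B : J -> C) (j : I) (i : J) :
  \sum_l' (\sum_l A l * unitop C j i l l') * B l' = A j * B i.
Proof.
rewrite /unitop (eq_bigr (fun l' => A j * B l' * (l' == i)%:R)) ?sum_dr // => l' _.
rewrite (eq_bigr (fun l => A l * (l == j)%:R * (l' == i)%:R)); last first.
  by move=> l _; rewrite natr_and mulrA.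
by rewrite -big_distrl /= sum_dr; ring.
Qed.

Lemma eta_norm (I : finType) (H : op C I I) (eta : C) : is_hermitian H -> 0 <= eta ->
  (forall s, is_state s -> `|optr (opmul H s)| <= eta) -> opnorm_le H eta.
Proof.
move=> HH e0 Hs.
have [HU HUc HL HTd] := spec_op HH.
set U := specU H in HU HUc HTd *; set mu := specL H in HL HTd *.
apply: (@opnorm_ext _ _ _ (dform U mu)); first by move=> i j; rewrite HTd.
apply: dform_norm => // k.
pose s : op C I I := fun l l' => U l k * (U l' k)^*.
have st : is_state s.
  split.
  - by move=> l l'; rewrite /s rmorphM /= conjCK mulrC.
  - move=> v.
    have -> : \sum_i \sum_j (v i)^* * s i j * v j = `|\sum_i (v i)^* * U i k| ^+ 2.
      rewrite normCK big_distrl; apply: eq_bigr => i _ /=; rewrite rmorph_sum big_distrr.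
      by apply: eq_bigr => j _ /=; rewrite /s rmorphM /= conjCK; ring.
    exact: exprn_ge0.
  - rewrite /optr /s; have := HU k k; rewrite /opmul /opadj eqxx mulr1n => <-.
    by apply: eq_bigr => l _; apply: mulrC.
have eig : forall i, \sum_j H i j * U j k = mu k * U i k.
  move=> i; rewrite -(dform_eigen mu HU i k); apply: eq_bigr => j _.
  by rewrite HTd.
have <- : optr (opmul H s) = mu k.
  rewrite /optr /opmul /s.
  rewrite (eq_bigr (fun i => (\sum_j H i j * U j k) * (U i k)^*)); last first.
    by move=> i _; rewrite big_distrl; apply: eq_bigr => j _ /=; ring.
  under eq_bigr => i _ do rewrite eig.
  have := HU k k; rewrite /opmul /opadj eqxx mulr1n => H1.
  rewrite -[RHS]mulr1 -H1 big_distrr; apply: eq_bigr => i _ /=; ring.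
exact: Hs.
Qed.

Variables (n : nat) (d : 'I_n -> nat) (L F : finType).
Variable V : op C (basisA d * F)%type L.

Lemma heisE (Y : op C (basisA d) (basisA d)) i j :
  heis (enc V) Y i j = \sum_x \sum_x' Y x x' * \sum_f V (x', f) j * (V (x, f) i)^*.
Proof.
rewrite /heis /optr /opmul /enc /ptrace2 /opmul /opadj.
apply: eq_bigr => x _; apply: eq_bigr => x' _; congr (_ * _).
by apply: eq_bigr => f _; rewrite unit_sum2.
Qed.

Lemma heis_herm (Y : op C (basisA d) (basisA d)) :
  is_hermitian Y -> is_hermitian (heis (enc V) Y).
Proof.
move=> HY i j; rewrite !heisE rmorph_sum exchange_big; apply: eq_bigr => x _.
rewrite rmorph_sum; apply: eq_bigr => x' _; rewrite rmorphM rmorph_sum /= -HY.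
congr (_ * _); apply: eq_bigr => f _; by rewrite rmorphM /= conjCK mulrC.
Qed.

Lemma duality (Y : op C (basisA d) (basisA d)) (s : op C L L) :
  optr (opmul Y (enc V s)) = optr (opmul (heis (enc V) Y) s).
Proof.
rewrite /optr /opmul.
rewrite /enc /ptrace2 /opmul /opadj.
under [RHS]eq_bigr => i _ do under eq_bigr => j _ do rewrite heisE.
transitivity (\sum_x \sum_x' \sum_f \sum_i \sum_j
   Y x x' * V (x', f) j * s j i * (V (x, f) i)^*).
  apply: eq_bigr => x _; apply: eq_bigr => x' _; rewrite big_distrr.
  apply: eq_bigr => f _ /=; rewrite big_distrr; apply: eq_bigr => i _ /=.
  rewrite big_distrl big_distrr; apply: eq_bigr => j _ /=; ring.
symmetry.
transitivity (\sum_i \sum_j \sum_x \sum_x' \sum_f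
   Y x x' * V (x', f) j * s j i * (V (x, f) i)^*).
  apply: eq_bigr => i _; apply: eq_bigr => j _; rewrite big_distrl.
  apply: eq_bigr => x _ /=; rewrite big_distrl; apply: eq_bigr => x' _ /=.
  rewrite -mulrA big_distrl big_distrr; apply: eq_bigr => f _ /=; ring.
under eq_bigr => i _ do rewrite exchange_big.
under eq_bigr => i _ do under eq_bigr => x _ do rewrite exchange_big.
under eq_bigr => i _ do under eq_bigr => x _ do under eq_bigr => x' _ do rewrite exchange_big.
rewrite exchange_big.
under eq_bigr => x _ do rewrite exchange_big.
under eq_bigr => x _ do under eq_bigr => x' _ do rewrite exchange_big.
by [].
Qed.
End H.

Section Al.
Variable C : numClosedFieldType.

Lemma opmulA (I J K M : finType) (A : op C I J) (B : op C J K) (D : op C K M) :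
  opmul (opmul A B) D = opmul A (opmul B D).
Proof.
apply: functional_extensionality => i; apply: functional_extensionality => m.
rewrite /opmul (eq_bigr (fun k => \sum_j A i j * B j k * D k m)); last first.
  by move=> k _; rewrite big_distrl.
rewrite exchange_big; apply: eq_bigr => j _ /=; rewrite big_distrr.
by apply: eq_bigr => k _ /=; ring.
Qed.

Lemma opmul1r (I J : finType) (A : op C I J) : opmul A (opid J) = A.
Proof.
apply: functional_extensionality => i; apply: functional_extensionality => j.
by rewrite /opmul /opid sum_dr.
Qed.

Lemma opmul1l (I J : finType) (A : op C I J) : opmul (opid I) A = A.
Proof.
apply: functional_extensionality => i; apply: functional_extensionality => j.
by rewrite /opmul /opid sum_dl.
Qed.

Lemma optrC (I J : finType) (A : op C I J) (B : op C J I) :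
  optr (opmul A B) = optr (opmul B A).
Proof.
rewrite /optr /opmul exchange_big; apply: eq_bigr => j _; apply: eq_bigr => i _.
exact: mulrC.
Qed.

Lemma iso_id (I J : finType) (W : op C I J) : is_isometry W -> opmul (opadj W) W = opid J.
Proof.
move=> HW; apply: functional_extensionality => i; apply: functional_extensionality => j.
exact: HW.
Qed.

Lemma step3 (E A : finType) (W : op C E A) (M P : op C A A) : is_isometry W ->
  optr (opmul (opmul (opmul W M) (opadj W)) (opmul (opmul W P) (opadj W))) =
  optr (opmul M P).
Proof.
move=> HW; rewrite !opmulA -[opmul (opadj W) (opmul W _)]opmulA iso_id // opmul1l.
by rewrite optrC !opmulA iso_id // opmul1r.
Qed.

Lemma sum_part (X Y : finType) (r : X -> Y) (G : Y -> X -> C) :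
  \sum_a \sum_(y | r y == a) G a y = \sum_y G (r y) y.
Proof.
rewrite [RHS](partition_big r xpredT) //=; apply: eq_bigr => a _.
by apply: eq_big => // y /eqP ->.
Qed.
End Al.

Section Ch.
Variable C : numClosedFieldType.

Lemma sum_pair (A B : finType) (G : A * B -> C) :
  \sum_p G p = \sum_a \sum_b G (a, b).
Proof. by rewrite pair_big; apply: eq_bigr => [[a b]]. Qed.

Lemma step2 (E A F : finType) (W : op C E A) (PO : op C (A * F)%type (A * F)%type) e e' f :
  opmul (opmul (optens W (opid F)) PO) (opadj (optens W (opid F))) (e', f) (e, f)
  = opmul (opmul W (fun a a' => PO (a, f) (a', f))) (opadj W) e' e.
Proof.
rewrite /opmul /opadj /optens /opid sum_pair; apply: eq_bigr => a' _.
rewrite (bigD1 f) //= [X in _ + X]big1 ?addr0; last first.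
  by move=> g /negbTE ng; rewrite /= eq_sym ng mulr0 rmorph0 mulr0.
rewrite /= eqxx mulr1n mulr1; congr (_ * _).
rewrite sum_pair; apply: eq_bigr => a _.
rewrite (bigD1 f) //= [X in _ + X]big1 ?addr0; last first.
  by move=> g /negbTE ng; rewrite /= eq_sym ng mulr0 mul0r.
by rewrite /= eqxx mulr1n mulr1.
Qed.

Variables (n : nat) (d : 'I_n -> nat) (L F E : finType).
Variable V : op C (basisA d * F)%type L.
Variable W : forall al : {set 'I_n}, op C E (basisSub d al).
Variable q : {set 'I_n} -> C.

Definition POf (i j : L) (al : {set 'I_n}) (f : F) : op C (basisSub d al) (basisSub d al) :=
  fun a a' => ptrace_out (opmul (opmul V (unitop C j i)) (opadj V)) (a, f) (a', f).

Lemma chanE (Nb : {set 'I_n} -> op C E E) i j :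
  heis (compl_chan q W V)
    (optens (fun x y : {set 'I_n} * E => if x.1 == y.1 then Nb x.1 x.2 y.2 else 0) (opid F)) i j
  = \sum_b q b * \sum_(f : F) optr (opmul (Nb b) (opmul (opmul (@W b) (@POf i j b f)) (opadj (@W b)))).
Proof.
rewrite /heis {1}/optr {1}/opmul /optens /compl_chan.
rewrite (@sum_pair ({set 'I_n} * E)%type F) (@sum_pair {set 'I_n} E).
under eq_bigr do under eq_bigr do under eq_bigr do rewrite (@sum_pair ({set 'I_n} * E)%type F) (@sum_pair {set 'I_n} E).
transitivity (\sum_b0 \sum_e \sum_(f : F) \sum_e' Nb b0 e e' * (q b0 *
   opmul (opmul (optens (@W b0) (opid F))
      (ptrace_out (opmul (opmul V (unitop C j i)) (opadj V))))
      (opadj (optens (@W b0) (opid F))) (e', f) (e, f))).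
  apply: eq_bigr => b0 _; apply: eq_bigr => e _; apply: eq_bigr => f _ /=.
  rewrite (bigD1 b0) //= [X in _ + X]big1 ?addr0; last first.
    move=> a /negbTE na; apply: big1 => e' _; apply: big1 => f' _.
    by rewrite eq_sym na !mul0r.
  rewrite eqxx; apply: eq_bigr => e' _.
  rewrite (bigD1 f) //= [X in _ + X]big1 ?addr0; last first.
    by move=> f' /negbTE nf; rewrite /opid eq_sym nf mulr0 mul0r.
  by rewrite /opid eqxx mulr1.
apply: eq_bigr => b0 _; rewrite big_distrr /= exchange_big /=.
apply: eq_bigr => f _; rewrite {1}/optr big_distrr /=; apply: eq_bigr => e _.
rewrite {1}/opmul big_distrr /=; apply: eq_bigr => e' _.
rewrite mulrCA; congr (_ * (_ * _)).
exact: step2.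
Qed.
End Ch.

Section Ch2.
Variable C : numClosedFieldType.
Variables (n : nat) (d : 'I_n -> nat) (L F : finType).
Variable V : op C (basisA d * F)%type L.

Lemma sum_part2 (X Y : finType) (r : X -> Y) (P : pred X) (G : Y -> X -> C) :
  \sum_a \sum_(y | (r y == a) && P y) G a y = \sum_(y | P y) G (r y) y.
Proof.
rewrite [RHS](partition_big r xpredT) //=; apply: eq_bigr => a _.
by apply: eq_big => [y|y /andP [/eqP -> _]] //; rewrite andbC.
Qed.

Lemma agree_sym (al : {set 'I_n}) (x y : basisA d) : agree_out al x y = agree_out al y x.
Proof.
by apply/forallP/forallP => H i; have /implyP Hi := H i; apply/implyP => /Hi /eqP ->.
Qed.

Lemma step4 (al : {set 'I_n}) (M : op C (basisSub d al) (basisSub d al)) i j :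
  \sum_(f : F) optr (opmul M (@POf _ _ _ _ _ V i j al f)) = heis (enc V) (embed M) i j.
Proof.
rewrite heisE /optr /opmul /POf /ptrace_out /=.
have R : forall (y x : basisA d) f,
    opmul (opmul V (unitop C j i)) (opadj V) (y, f) (x, f) = V (y, f) j * (V (x, f) i)^*.
  by move=> y x f; rewrite /opmul /opadj unit_sum2.
transitivity (\sum_(f : F) \sum_y \sum_x embed M x y * (V (y, f) j * (V (x, f) i)^*)).
  apply: eq_bigr => f _.
  rewrite exchange_big /=.
  under eq_bigr => a _ do (under eq_bigr => a' _ do rewrite big_distrr /=; rewrite exchange_big /=).
  rewrite (sum_part (res al)).
  rewrite (eq_bigr (fun y => \sum_(y0 | agree_out al y y0) M (res al y0) (res al y) *
       opmul (opmul V (unitop C j i)) (opadj V) (y, f) (y0, f))); last first.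
    move=> y _; rewrite -(sum_part2 (res al) (agree_out al y)
      (fun a y0 => M a (res al y) * opmul (opmul V (unitop C j i)) (opadj V) (y, f) (y0, f))).
    apply: eq_bigr => a' _.
    by rewrite big_distrr.
  apply: eq_bigr => y _; rewrite big_mkcond; apply: eq_bigr => x _.
  by rewrite /embed agree_sym R; case: ifP => _; rewrite ?mul0r.
rewrite exchange_big; under eq_bigr do rewrite exchange_big.
rewrite exchange_big; apply: eq_bigr => x _; apply: eq_bigr => y _.
by rewrite big_distrr.
Qed.
End Ch2.

Section Fi.
Variable C : numClosedFieldType.
Variables (n : nat) (d : 'I_n -> nat) (L F : finType).
Variable V : op C (basisA d * F)%type L.

Lemma agree_res (al : {set 'I_n}) (x y : basisA d) :
  agree_out al x y && (res al x == res al y) = (x == y).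
Proof.
apply/andP/eqP => [[/forallP Ha /eqP Hr]|->]; last by split => //; apply/forallP => i; apply/implyP.
apply/ffunP => i; case: (boolP (i \in al)) => iA.
  have := congr1 (fun g : basisSub d al => g (exist (fun k => k \in al) i iA)) Hr.
  by rewrite /res !ffunE.
by have /implyP/(_ iA)/eqP := Ha i.
Qed.

Lemma embed_lin (al : {set 'I_n}) (A B : op C (basisSub d al) (basisSub d al)) c x y :
  embed (fun a b => A a b - c * (a == b)%:R - B a b) x y
  = embed A x y - c * (x == y)%:R - embed B x y.
Proof.
rewrite /embed -(agree_res al); case: ifP => ag //=.
by rewrite mulr0 !subr0.
Qed.

Lemma embed_herm (al : {set 'I_n}) (A : op C (basisSub d al) (basisSub d al)) :
  is_hermitian A -> is_hermitian (embed A).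
Proof.
move=> HA x y; rewrite /embed agree_sym; case: ifP => _; last by rewrite conjC0.
exact: HA.
Qed.

Lemma heis_comb (S : {set {set 'I_n}}) (A B : {set 'I_n} -> op C (basisA d) (basisA d))
  (c : {set 'I_n} -> C) i j : is_isometry V ->
  \sum_(b in S) heis (enc V) (fun x y => A b x y - c b * (x == y)%:R - B b x y) i j
  = heis (enc V) (fun x y => \sum_(b in S) A b x y) i j - (\sum_(b in S) c b) * (i == j)%:R
    - heis (enc V) (fun x y => \sum_(b in S) B b x y) i j.
Proof.
move=> HV.
have K1 : \sum_x \sum_x' (x == x')%:R * \sum_f V (x', f) j * (V (x, f) i)^* = (i == j)%:R.
  rewrite -(HV i j) /opmul /opadj sum_pair; apply: eq_bigr => x _.
  by rewrite sum_dl; apply: eq_bigr => f _; rewrite mulrC.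
have K2 : forall x x', enc V (unitop C j i) x' x = \sum_f V (x', f) j * (V (x, f) i)^*.
  by move=> x x'; rewrite /enc /ptrace2; apply: eq_bigr => f _; rewrite /opmul /opadj unit_sum2.
rewrite !heisE -K1 big_distrr /= -!sumrB exchange_big; apply: eq_bigr => x _ /=.
rewrite exchange_big big_distrr /= -!sumrB; apply: eq_bigr => x' _ /=.
rewrite !big_distrl /= -!sumrB; apply: eq_bigr => b _ /=.
rewrite K2; ring.
Qed.
End Fi.

Lemma opnorm_zero (C : numClosedFieldType) (I J : finType) (c : C) :
  0 <= c -> opnorm_le (fun (_ : I) (_ : J) => 0 : C) c.
Proof.
move=> c0; split => // v; rewrite big1 ?mulr_ge0 ?exprn_ge0 //.
  by apply: sumr_ge0 => j _; apply: exprn_ge0.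
by move=> i _; rewrite big1 ?normr0 ?expr0n // => j _; rewrite mul0r.
Qed.

Lemma optr_scale (C : numClosedFieldType) (I J : finType) (s : C) (X : op C I J) (Y : op C J I) :
  optr (opmul (fun e e' => s * X e e') Y) = s * optr (opmul X Y).
Proof.
rewrite /optr /opmul big_distrr; apply: eq_bigr => i _; rewrite big_distrr.
by apply: eq_bigr => j _ /=; rewrite mulrA.
Qed.

Unset Implicit Arguments.
Theorem lemma1 (C : numClosedFieldType) (n : nat) (d : 'I_n -> nat)
  (L F E : finType)
  (V : op C (basisA d * F)%type L) (HV : is_isometry V)
  (TL : op C L L) (HTL : is_hermitian TL)
  (S : {set {set 'I_n}})
  (T : forall al : {set 'I_n}, op C (basisSub d al) (basisSub d al))
  (HT : forall al, al \in S -> is_hermitian (T al))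
  (nu delta : C) (Hnu : nu \is Num.real) (Hdelta : 0 <= delta)
  (Hclose : opnorm_le (opsub (opsub TL (opscale nu (opid L)))
                             (heis (enc V) (TA S T))) delta)
  (tm tp : {set 'I_n} -> C)
  (Ht : forall al, al \in S -> [/\ tm al \is Num.real, tp al \is Num.real & tm al <= tp al])
  (P : forall al : {set 'I_n}, op C (basisSub d al) (basisSub d al))
  (HP : forall al, al \in S -> spec_proj_out (T al) (tm al) (tp al) (P al))
  (eta : C) (Heta0 : 0 <= eta)
  (Heta : forall sigma : op C L L, is_state sigma ->
            `| optr (opmul (etaop S T tm tp P) (enc V sigma)) | <= eta)
  (q : {set 'I_n} -> C) (Hq0 : forall al, 0 <= q al) (Hq1 : \sum_al q al = 1)
  (HqS : forall al, al \in S -> 0 < q al)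
  (W : forall al : {set 'I_n}, op C E (basisSub d al))
  (HW : forall al, is_isometry (W al)) :
  exists Z : op C ({set 'I_n} * E)%type ({set 'I_n} * E)%type,
    [/\ is_hermitian Z,
        opnorm_le (opsub (heis (compl_chan q W V) (optens Z (opid F)))
                         (opsub TL (opscale (nu + \sum_(al in S) (tm al + tp al) / 2)
                                            (opid L))))
                  (delta + eta)
      & opnorm_le Z (\big[Num.max/0]_(al in S) ((tp al - tm al) / (2 * q al)))].
Proof.
pose t al := (tm al + tp al) / 2.
pose M al := Mop (T al) (tm al) (tp al).
pose X al := opmul (opsub (T al) (opscale (t al) (opid _))) (P al).
pose Nb al : op C E E := fun e e' =>
  if al \in S then (q al)^-1 * opmul (opmul (W al) (M al)) (opadj (W al)) e e' else 0.
pose Z : op C ({set 'I_n} * E)%type ({set 'I_n} * E)%type :=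
  fun x y => if x.1 == y.1 then Nb x.1 x.2 y.2 else 0.
have HA : forall al, al \in S ->
  [/\ (forall k, ccf (T al) (tm al) (tp al) k \is Num.real),
      (forall k, `|ccf (T al) (tm al) (tp al) k| <= (tp al - tm al) / 2) &
      forall a b, M al a b = T al a b - t al * (a == b)%:R - X al a b].
  by move=> al alS; have [r1 r2 r3] := Ht al alS; exact: lemA (HT al alS) r1 r2 r3 (HP al alS).
have NbD : forall al, al \in S -> forall e e', Nb al e e' =
    dform (opmul (W al) (specU (T al))) (fun k => (q al)^-1 * ccf (T al) (tm al) (tp al) k) e e'.
  move=> al alS e e'; rewrite /Nb alS conj_dform /dform big_distrr.
  by apply: eq_bigr => k _ /=; rewrite !mulrA.
have qr : forall al, al \in S -> (q al)^-1 \is Num.real.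
  by move=> al alS; rewrite realV gtr0_real // HqS.
have hN : forall al e e', Nb al e' e = (Nb al e e')^*.
  move=> al e e'; case: (boolP (al \in S)) => alS; last by rewrite /Nb (negbTE alS) conjC0.
  rewrite !NbD //; apply: dform_herm => k; rewrite realM // ?qr //.
  by have [] := HA al alS.
exists Z; split.
- move=> x y; rewrite /Z eq_sym; case: ifP => e; last by rewrite conjC0.
  by rewrite (eqP e); apply: hN.
- have HX : forall al, al \in S -> forall a b, X al a b = T al a b - t al * (a == b)%:R - M al a b.
    by move=> al alS a b; have [_ _ H3] := HA al alS; rewrite H3; ring.
  have Heta' : opnorm_le (heis (enc V) (etaop S T tm tp P)) eta.
    apply: eta_norm => //; last by move=> s st; rewrite -duality; exact: Heta.
    apply: heis_herm => x y; rewrite /etaop rmorph_sum; apply: eq_bigr => al alS.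
    apply: embed_herm => a b; rewrite -/(X al) !HX //.
    have [Hr _ _] := HA al alS.
    have tr : t al \is Num.real.
      by have [r1 r2 _] := Ht al alS; rewrite realM ?realD ?realV ?realn.
    rewrite !rmorphB /= (HT al alS) rmorphM /= (conj_Creal tr) eq_sym.
    have -> : (((a == b)%:R : C)^* = (a == b)%:R) by rewrite conj_Creal ?realn.
    by rewrite /M /Mop (dform_herm _ Hr).
  apply: (opnorm_ext _ (opnorm_add (opnorm_opp Hclose) (opnorm_opp Heta'))).
  move=> i j; rewrite /opsub /opscale /opid /=.
  have -> : heis (compl_chan q W V) (optens Z (opid F)) i j =
    \sum_b q b * \sum_(f : F) optr (opmul (Nb b) (opmul (opmul (@W b) (@POf _ _ _ _ _ V i j b f)) (opadj (@W b)))).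
    exact: chanE.
  have E1 : \sum_b q b * \sum_(f : F) optr (opmul (Nb b) (opmul (opmul (@W b)
        (@POf _ _ _ _ _ V i j b f)) (opadj (@W b))))
      = \sum_(b in S) heis (enc V) (embed (M b)) i j.
    rewrite [RHS]big_mkcond; apply: eq_bigr => b _; case: ifP => bS.
      rewrite /Nb bS.
      under eq_bigr => f _ do rewrite optr_scale step3 //.
      rewrite -big_distrr /= mulrA mulfV ?mul1r; first exact: step4.
      by rewrite lt0r_neq0 // HqS.
    rewrite /Nb bS big1 ?mulr0 // => f _.
    rewrite /optr /opmul big1 // => e _; rewrite big1 // => e' _; by rewrite mul0r.
  have E2 : \sum_(b in S) heis (enc V) (embed (M b)) i j =
      \sum_(b in S) heis (enc V) (fun x y => embed (T b) x y - t b * (x == y)%:R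
                                     - embed (X b) x y) i j.
    apply: eq_bigr => b bS.
    have -> : M b = (fun a c => T b a c - t b * (a == c)%:R - X b a c).
      apply: functional_extensionality => a; apply: functional_extensionality => c.
      by have [_ _ H3] := HA b bS; rewrite H3.
    congr (heis _ _ i j); apply: functional_extensionality => x.
    apply: functional_extensionality => y; exact: embed_lin.
  rewrite E1 E2 heis_comb //.
  have ETA : heis (enc V) (fun x y => \sum_(b in S) embed (X b) x y) i j =
             heis (enc V) (etaop S T tm tp P) i j by [].
  have ETA2 : heis (enc V) (fun x y => \sum_(b in S) embed (T b) x y) i j =
             heis (enc V) (TA S T) i j by [].
  rewrite ETA ETA2 /t; ring.
- pose f al := (tp al - tm al) / (2 * q al).
  have fpos : forall al, al \in S -> 0 <= f al.
    move=> al alS; have [_ _ le] := Ht al alS.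
    by rewrite /f divr_ge0 ?subr_ge0 // ltW // mulr_gt0 // HqS.
  have [c0 cge] := bigmax_prop fpos.
  apply: block_norm => // b.
  case: (boolP (b \in S)) => bS; last first.
    apply: (@opnorm_ext _ _ _ (fun _ _ => 0)); last exact: opnorm_zero.
    by move=> e e'; rewrite /Nb (negbTE bS).
  apply: (@opnorm_ext _ _ _ (dform (opmul (W b) (specU (T b)))
      (fun k => (q b)^-1 * ccf (T b) (tm b) (tp b) k))); first by move=> e e'; rewrite NbD.
  apply: opnorm_mono (cge b bS).
  have [HU _ _ _] := spec_op (HT b bS).
  apply: dform_norm; [exact: iso_mul | exact: fpos |] => k.
  have qp := HqS b bS.
  have qi : 0 <= (q b)^-1 by rewrite invr_ge0 ltW.
  rewrite normrM (ger0_norm qi).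
  have [_ H2 _] := HA b bS.
  apply: le_trans (ler_wpM2l qi (H2 k)) _.
  rewrite le_eqVlt; apply/orP; left; apply/eqP; rewrite /f.
  by field; rewrite lt0r_neq0.
Qed.
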